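(* Let $n\in\mathbb{N}$, $\mathcal{H}=(\mathbb{C}^2)^{\otimes n}$ with computational basis $\{\lvert\bm b\rangle:\bm b\in\{0,1\}^n\}$, let $c:\{0,1\}^n\to\mathbb{R}$ and $\mathcal{S}\subseteq\{0,1\}^n$, let $C\in\mathcal{L}(\mathcal{H})$ be defined by $C\lvert\bm b\rangle=c(\bm b)\lvert\bm b\rangle$, let $\mathcal{H}_{\mathcal{S}}=\operatorname{span}\{\lvert\bm b\rangle:\bm b\in\mathcal{S}\}$ with orthogonal projection $P_{\mathcal{S}}$. Let $\lvert\iota\rangle\in\mathcal{H}_{\mathcal{S}}$ be a unit vector and let $U_1,\dots,U_\ell\in\mathcal{L}(\mathcal{H})$ be unitaries with $U_\ell=\mathbb{1}$ such that $\{U_j\lvert\iota\rangle:j=1,\dots,\ell\}$ is linearly independent. For $\bm\alpha\in\mathbb{C}^\ell$ put $M_{\bm\alpha}=\sum_{j=1}^\ell\alpha_jU_j$, and consider the problem \[ \min_{\bm\alpha\in\mathbb{C}^\ell}\ \langle\iota\rvert M_{\bm\alpha}^\dagger C M_{\bm\alpha}\lvert\iota\rangle\quad\text{s.t.}\quad \langle\iota\rvert M_{\bm\alpha}^\dagger M_{\bm\alpha}\lvert\iota\rangle=1,\quad \langle\iota\rvert M_{\bm\alpha}^\dagger(\mathbb{1}-P_{\mathcal{S}}) M_{\bm\alpha}\lvert\iota\rangle=0. \tag{P} \] Define $\mathbf F,\mathbf G,\mathbf H\in\mathbb{C}^{\ell\times\ell}$ by $\mathbf F_{jk}=\langle\iota\rvert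 U_j^\dagger U_k\lvert\iota\rangle$, $\mathbf G_{jk}=\langle\iota\rvert U_j^\dagger(\mathbb{1}-P_{\mathcal{S}})U_k\lvert\iota\rangle$, $\mathbf H_{jk}=\langle\iota\rvert U_j^\dagger C U_k\lvert\iota\rangle$, and the real symmetric $2\ell\times2\ell$ matrices \[ \bm F=\begin{pmatrix}\operatorname{Re}\mathbf F&-\operatorname{Im}\mathbf F\\ \operatorname{Im}\mathbf F&\operatorname{Re}\mathbf F\end{pmatrix},\ \bm G=\begin{pmatrix}\operatorname{Re}\mathbf G&-\operatorname{Im}\mathbf G\\ \operatorname{Im}\mathbf G&\operatorname{Re}\mathbf G\end{pmatrix},\ \bm H=\begin{pmatrix}\operatorname{Re}\mathbf H&-\operatorname{Im}\mathbf H\\ \operatorname{Im}\mathbf H&\operatorname{Re}\mathbf H\end{pmatrix}. \] Let $m=\dim\ker\bm G$ and let $\bm B_{\bm G}$ be a real orthogonal $2\ell\times2\ell$ matrix such that $\bm B_{\bm G}\bm G\bm B_{\bm G}^{-1}$ is diagonal with its first $m$ diagonal entries equal to $0$ (and the others nonzero). Let $\tilde{\bm F}$ and $\tilde{\bm H}$ be the upper-left $m\times m$ blocks of $\bm B_{\bm G}\bm F\bm B_{\bm G}^{-1}$ and $\bm B_{\bm G}\bm H\bm B_{\bm G}^{-1}$, respectively. Let $\lambda_0$ be the smallest generalized eigenvalue of the generalized eigenvalue problem $\tilde{\bm H}\bm x=\lambda\tilde{\bm F}\bm x$, $\bm x\in\mathbb{R}^m\setminus\{\bm 0\}$, and let $\bm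 x_0$ be an associated generalized eigenvector normalized so that $\bm x_0^{\top}\tilde{\bm F}\bm x_0=1$. Then the minimum of (P) equals $\lambda_0$, and a minimizer of (P) is \[ \bm\alpha_0=\big[\bm B_{\bm G}^{-1}(\bm x_0,0,\dots,0)\big]_{1,\dots,\ell}+i\,\big[\bm B_{\bm G}^{-1}(\bm x_0,0,\dots,0)\big]_{\ell+1,\dots,2\ell}, \] where $(\bm x_0,0,\dots,0)\in\mathbb{R}^{2\ell}$ is $\bm x_0$ padded with $2\ell-m$ zeros and $[\bm v]_{a,\dots,b}$ denotes the vector of entries $a$ through $b$ of $\bm v$.
   Context: $\mathcal{L}(\mathcal{H})$ denotes linear operators on $\mathcal{H}$; $\mathbb{1}$ is the identity. The data $(n,c,\mathcal{S})$ is a constrained combinatorial optimization problem with objective $c$ and feasible set $\mathcal{S}$. A generalized eigenvalue of the pair $(\tilde{\bm H},\tilde{\bm F})$ is a $\lambda\in\mathbb{R}$ for which there is a nonzero $\bm x$ with $\tilde{\bm H}\bm x=\lambda\tilde{\bm F}\bm x$. *)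

(* Defs.v *)
From HB Require Import structures.
From mathcomp Require Import all_boot all_order all_algebra.
From mathcomp Require Import complex.
Set Implicit Arguments. Unset Strict Implicit. Unset Printing Implicit Defensive.
Import Order.TTheory GRing.Theory Num.Theory.
Local Open Scope ring_scope.
Local Open Scope complex_scope.

Section Defs.
Variable R : rcfType.
Local Notation C := R[i].

Definition dag (m n : nat) (A : 'M[C]_(m, n)) : 'M[C]_(n, m) :=
  (map_mx (@conjc R) A)^T.

Definition unitary_mx (N : nat) (U : 'M[C]_N) : Prop :=
  dag U *m U = 1%:M /\ U *m dag U = 1%:M.

Definition orthogonal_mx (N : nat) (B : 'M[R]_N) : Prop :=
  B^T *m B = 1%:M /\ B *m B^T = 1%:M.

(* computational basis indexed by bit strings b in {0,1}^n = {ffun 'I_n -> bool};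
   the Hilbert space (C^2)^{(x) n} is C^#|bits n|  (#|bits n| = 2^n),
   the basis vector |b> being the enum_rank b -th standard basis vector. *)
Definition bits (n : nat) := {ffun 'I_n -> bool}.
Definition dimH (n : nat) := #|{: bits n}|.

Definition costop (n : nat) (c : bits n -> R) : 'M[C]_(dimH n) :=
  diag_mx (\row_(i < dimH n) (c (enum_val i))%:C).

Definition projS (n : nat) (S : {set bits n}) : 'M[C]_(dimH n) :=
  diag_mx (\row_(i < dimH n) (((enum_val i) \in S)%:R : C)).

Definition Malpha (N l : nat) (U : 'I_l -> 'M[C]_N) (alpha : 'cV[C]_l)
  : 'M[C]_N := \sum_(j < l) alpha j 0 *: U j.

Definition braket (N : nat) (u : 'cV[C]_N) (A : 'M[C]_N) (v : 'cV[C]_N) : C :=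
  (dag u *m A *m v) 0 0.

Definition gram (N l : nat) (U : 'I_l -> 'M[C]_N) (iota : 'cV[C]_N)
  (A : 'M[C]_N) : 'M[C]_l :=
  \matrix_(j < l, k < l) braket iota (dag (U j) *m A *m U k) iota.

Definition realify (l : nat) (X : 'M[C]_l) : 'M[R]_(l + l) :=
  block_mx (map_mx (@complex.Re R) X) (- map_mx (@complex.Im R) X)
           (map_mx (@complex.Im R) X) (map_mx (@complex.Re R) X).

Definition embed (k N : nat) : 'M[R]_(N, k) :=
  \matrix_(i < N, j < k) ((val i == val j)%:R).

Definition ulblock (k N : nat) (A : 'M[R]_N) : 'M[R]_k :=
  (embed k N)^T *m A *m embed k N.

Definition pad (k N : nat) (x : 'cV[R]_k) : 'cV[R]_N := embed k N *m x.

Definition gen_eigenvalue (k : nat) (H F : 'M[R]_k) (lambda : R) : Prop :=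
  exists2 x : 'cV[R]_k, x != 0 & H *m x = lambda *: (F *m x).

End Defs.

(* Main.v *)
Require Import Defs.
From HB Require Import structures.
From mathcomp Require Import all_boot all_order all_algebra.
From mathcomp Require Import complex.
From mathcomp Require Import spectral sesquilinear ring.
Import Order.TTheory GRing.Theory Num.Theory.
Local Open Scope ring_scope.
Local Open Scope complex_scope.

Set Implicit Arguments. Unset Strict Implicit. Unset Printing Implicit Defensive.


Section H.
Variable R : rcfType.
Local Notation C := R[i].

Lemma conjCE (x : C) : Num.conj x = x^*%C.
Proof.
have := complexRe x; rewrite ReJ_add ReE => /(mulIf _) h.
by apply: (addrI x); apply: h; rewrite invr_eq0 pnatr_eq0.
Qed.

Lemma dagE m n (A : 'M[C]_(m, n)) : dag A = (A ^t Num.conj)%sesqui.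
Proof. rewrite /dag map_trmx; apply/matrixP=> i j; rewrite !mxE; exact/esym/conjCE. Qed.

Lemma dagM m n p (A : 'M[C]_(m, n)) (B : 'M[C]_(n, p)) :
  dag (A *m B) = dag B *m dag A.
Proof. by rewrite /dag map_mxM trmx_mul. Qed.

Lemma dagK m n (A : 'M[C]_(m, n)) : dag (dag A) = A.
Proof. by apply/matrixP=> i j; rewrite !mxE conjcK. Qed.

Lemma dagD m n (A B : 'M[C]_(m, n)) : dag (A + B) = dag A + dag B.
Proof. by apply/matrixP=> i j; rewrite !mxE rmorphD. Qed.

Lemma dagN m n (A : 'M[C]_(m, n)) : dag (- A) = - dag A.
Proof. by apply/matrixP=> i j; rewrite !mxE rmorphN. Qed.

Lemma dagZ m n a (A : 'M[C]_(m, n)) : dag (a *: A) = a^*%C *: dag A.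
Proof. by apply/matrixP=> i j; rewrite !mxE rmorphM. Qed.

Lemma dag1 n : dag (1%:M : 'M[C]_n) = 1%:M.
Proof. by apply/matrixP=> i j; rewrite !mxE conjc_nat eq_sym. Qed.

Lemma dag_sum m n I (r : seq I) (P : pred I) (F : I -> 'M[C]_(m, n)) :
  dag (\sum_(i <- r | P i) F i) = \sum_(i <- r | P i) dag (F i).
Proof. by apply: (big_morph _ (@dagD m n)); apply/matrixP=> i j; rewrite !mxE conjc0. Qed.

Definition qf n (w : 'cV[C]_n) (X : 'M[C]_n) : C := (dag w *m X *m w) 0 0.

Lemma qf_conj n (w : 'cV[C]_n) X : (qf w X)^*%C = qf w (dag X).
Proof.
rewrite /qf; have -> : ((dag w *m X *m w) 0 0)^*%C = dag (dag w *m X *m w) 0 0.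
  by rewrite !mxE.
by rewrite !dagM dagK mulmxA.
Qed.

Lemma qf_herm_Im n (w : 'cV[C]_n) X : dag X = X -> complex.Im (qf w X) = 0.
Proof.
move=> hX; have := qf_conj w X; rewrite hX.
case: (qf w X) => a b /= [] /eqP; rewrite eq_sym -subr_eq0 opprK -mulr2n.
by rewrite mulrn_eq0 /= => /eqP.
Qed.

Lemma qf_herm n (w : 'cV[C]_n) X : dag X = X -> qf w X = (complex.Re (qf w X))%:C.
Proof. by move=> /(qf_herm_Im w); case: (qf w X) => a b /= ->. Qed.

Lemma qfM n p (M : 'M[C]_(n, p)) (u : 'cV[C]_p) X :
  qf (M *m u) X = qf u (dag M *m X *m M).
Proof. by rewrite /qf dagM !mulmxA. Qed.

Lemma qf1E n (w : 'cV[C]_n) : qf w 1%:M = \sum_i (w i 0)^*%C * w i 0.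
Proof. by rewrite /qf mulmx1 mxE; apply: eq_bigr => i _; rewrite !mxE. Qed.

Lemma cnorm_ge0 (x : C) : 0 <= x^*%C * x.
Proof. by rewrite mulrC mulcJ_ge0. Qed.

Lemma qf1_ge0 n (w : 'cV[C]_n) : 0 <= qf w 1%:M.
Proof. by rewrite qf1E sumr_ge0 // => i _; exact: cnorm_ge0. Qed.

Lemma qf1_gt0 n (w : 'cV[C]_n) : w != 0 -> 0 < qf w 1%:M.
Proof.
move=> wn0; rewrite lt_def qf1_ge0 andbT; apply/eqP => h.
move: wn0; rewrite qf1E in h; apply/negP; rewrite negbK; apply/eqP/matrixP => i j.
rewrite ord1 mxE.
have /eqP := @psumr_eq0P _ _ _ _ (fun i _ => cnorm_ge0 (w i 0)) h i isT.
by rewrite mulf_eq0 conjc_eq0 orbb => /eqP.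
Qed.

Lemma braketE N (u : 'cV[C]_N) A v : braket u A v = (dag u *m A *m v) 0 0.
Proof. by []. Qed.

End H.


Section H.
Variable R : rcfType.
Local Notation C := R[i].

Lemma qf_sum n l (iota : 'cV[C]_n) (alpha : 'cV[C]_l) (Y : 'I_l -> 'I_l -> 'M[C]_n) :
  qf iota (\sum_j \sum_k ((alpha j 0)^* * alpha k 0) *: Y j k) =
  \sum_j \sum_k ((alpha j 0)^* * qf iota (Y j k) * alpha k 0).
Proof.
rewrite /qf mulmx_sumr mulmx_suml summxE; apply: eq_bigr => j _.
rewrite mulmx_sumr mulmx_suml summxE; apply: eq_bigr => k _.
by rewrite -scalemxAr -scalemxAl mxE mulrAC.
Qed.

Lemma Malpha_form N l (U : 'I_l -> 'M[C]_N) (iota : 'cV[C]_N) (alpha : 'cV[C]_l) A :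
  braket iota (dag (Malpha U alpha) *m A *m Malpha U alpha) iota =
  qf alpha (gram U iota A).
Proof.
have -> : dag (Malpha U alpha) *m A *m Malpha U alpha =
   \sum_j \sum_k ((alpha j 0)^* * alpha k 0) *: (dag (U j) *m A *m U k).
  rewrite /Malpha dag_sum !mulmx_suml; apply: eq_bigr => j _.
  rewrite dagZ -scalemxAl mulmx_sumr; apply: eq_bigr => k _.
  by rewrite -!scalemxAl -scalemxAr scalerA.
rewrite (_ : braket _ _ _ = qf iota (\sum_j \sum_k ((alpha j 0)^* * alpha k 0) *: (dag (U j) *m A *m U k))) //.
rewrite qf_sum exchange_big /qf mxE; apply: eq_bigr => k _.
rewrite mxE big_distrl; apply: eq_bigr => j _ /=.
by rewrite !mxE /braket [in RHS]mxE.
Qed.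

End H.


Section H.
Variable R : rcfType.
Local Notation C := R[i].

Definition cplx l (y : 'cV[R]_(l + l)) : 'cV[C]_l :=
  \col_(j < l) ((y (lshift l j) 0) +i* (y (rshift l j) 0)).

Definition rq n (y : 'cV[R]_n) (M : 'M[R]_n) : R := (y^T *m M *m y) 0 0.

Lemma qfE n (w : 'cV[C]_n) X :
  qf w X = \sum_j \sum_k (w j 0)^*%C * X j k * w k 0.
Proof.
rewrite /qf mxE exchange_big; apply: eq_bigr => k _; rewrite mxE big_distrl.
by apply: eq_bigr => j _; rewrite !mxE.
Qed.

Lemma rqE n (y : 'cV[R]_n) M :
  rq y M = \sum_j \sum_k y j 0 * M j k * y k 0.
Proof.
rewrite /rq mxE exchange_big; apply: eq_bigr => k _; rewrite mxE big_distrl.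
by apply: eq_bigr => j _; rewrite !mxE.
Qed.

Lemma sumS l (G : 'I_(l + l) -> R) :
  \sum_i G i = \sum_(i < l) G (lshift l i) + \sum_(i < l) G (rshift l i).
Proof. exact: big_split_ord. Qed.

Lemma sum2_split l (F : 'I_(l + l) -> 'I_(l + l) -> R) :
  \sum_i \sum_j F i j = \sum_(i < l) \sum_(j < l)
    (F (lshift l i) (lshift l j) + F (lshift l i) (rshift l j) +
     F (rshift l i) (lshift l j) + F (rshift l i) (rshift l j)).
Proof.
under [RHS]eq_bigr => i _ do rewrite !big_split.
rewrite !big_split /= sumS.
rewrite (eq_bigr (fun i : 'I_l => \sum_(j < l) F (lshift l i) (lshift l j) + \sum_(j < l) F (lshift l i) (rshift l j))); last by move=> i _; rewrite sumS.
rewrite [X in _ + X](eq_bigr (fun i : 'I_l => \sum_(j < l) F (rshift l i) (lshift l j) + \sum_(j < l) F (rshift l i) (rshift l j))); last by move=> i _; rewrite sumS.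
by rewrite !big_split !addrA.
Qed.

Lemma realify_form l (X : 'M[C]_l) (y : 'cV[R]_(l + l)) :
  complex.Re (qf (cplx y) X) = rq y (realify X).
Proof.
rewrite qfE rqE sum2_split raddf_sum; apply: eq_bigr => j _.
rewrite raddf_sum; apply: eq_bigr => k _.
rewrite /realify !block_mxEul !block_mxEur !block_mxEdl !block_mxEdr !mxE.
case: (X j k) => xr xi /=.
ring.
Qed.

Lemma cplx_Im l (X : 'M[C]_l) (y : 'cV[R]_(l + l)) :
  dag X = X -> qf (cplx y) X = (rq y (realify X))%:C.
Proof. by move=> hX; rewrite qf_herm // realify_form. Qed.

End H.


Section H.
Variable R : rcfType.
Local Notation C := R[i].
Local Notation toC := (real_complex R).

Lemma spec_dec n (M : 'M[C]_n) : dag M = M ->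
  exists P : 'M[C]_n, exists d : 'rV[C]_n,
   [/\ dag P *m P = 1%:M, P *m dag P = 1%:M & M = dag P *m diag_mx d *m P].
Proof.
move=> hM; have nM : M \is normalmx by apply/normalmxP; rewrite -!dagE hM.
have /orthomx_spectralP hM' := nM.
have Pu := spectral_unitarymx M.
exists (spectralmx M), (spectral_diag M); split.
- by rewrite dagE -invmx_unitary // mulVmx // spectral_unit.
- by rewrite dagE; apply/unitarymxP.
- by rewrite dagE -invmx_unitary.
Qed.

Lemma diag_delta n (d : 'rV[C]_n) i :
  diag_mx d *m (delta_mx i 0 : 'cV[C]_n) = d 0 i *: delta_mx i 0.
Proof.
rewrite mul_diag_mx; apply/matrixP => j k; rewrite !mxE.
by case: (eqVneq j i) => [->|h]; rewrite ?mulr0 ?mulr1 //= andbF ?mulr0.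
Qed.

Lemma dag_delta n (i : 'I_n) : dag (delta_mx i 0 : 'cV[C]_n) = delta_mx 0 i.
Proof. by apply/matrixP => a b; rewrite !mxE conjc_nat andbC. Qed.

Lemma qf_delta_diag n (d : 'rV[C]_n) i : qf (delta_mx i 0) (diag_mx d) = d 0 i.
Proof.
rewrite /qf dag_delta -mulmxA diag_delta -scalemxAr mul_delta_mx mxE.
by rewrite !mxE !eqxx mulr1.
Qed.

Lemma spec_entry n (P : 'M[C]_n) d M i :
  dag P *m P = 1%:M -> P *m dag P = 1%:M -> M = dag P *m diag_mx d *m P ->
  qf (dag P *m delta_mx i 0) M = d 0 i.
Proof.
move=> h1 h2 ->; rewrite qfM dagK !mulmxA h2 mul1mx -mulmxA h2 mulmx1.
exact: qf_delta_diag.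
Qed.

Lemma qf_diag n (v : 'cV[C]_n) d :
  qf v (diag_mx d) = \sum_i (v i 0)^*%C * d 0 i * v i 0.
Proof.
rewrite qfE; apply: eq_bigr => j _; rewrite (bigD1 j) //= big1 ?addr0.
  by rewrite !mxE eqxx mulr1n.
by move=> k /negbTE hk; rewrite !mxE eq_sym hk /= mulr0n mulr0 mul0r.
Qed.

Lemma dag_mapC n (M : 'M[R]_n) : M^T = M -> dag (map_mx toC M) = map_mx toC M.
Proof.
move=> hM; apply/matrixP => i j; rewrite !mxE conjc_real.
by rewrite -[in RHS]hM mxE.
Qed.

Lemma qf_mapC n (M : 'M[R]_n) x :
  qf (map_mx toC x) (map_mx toC M) = (rq x M)%:C.
Proof.
rewrite qfE rqE rmorph_sum; apply: eq_bigr => j _.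
rewrite rmorph_sum; apply: eq_bigr => k _.
by rewrite !mxE conjc_real !rmorphM.
Qed.

Lemma mapRe_mul n (M : 'M[R]_n) (z : 'cV[C]_n) :
  map_mx (@complex.Re R) (map_mx toC M *m z) = M *m map_mx (@complex.Re R) z.
Proof.
apply/matrixP => i j; rewrite !mxE raddf_sum; apply: eq_bigr => k _.
by rewrite !mxE; case: (z k j) => a b /=; ring.
Qed.

Lemma mapIm_mul n (M : 'M[R]_n) (z : 'cV[C]_n) :
  map_mx (@complex.Im R) (map_mx toC M *m z) = M *m map_mx (@complex.Im R) z.
Proof.
apply/matrixP => i j; rewrite !mxE raddf_sum; apply: eq_bigr => k _.
by rewrite !mxE; case: (z k j) => a b /=; ring.
Qed.

Lemma mapRe_scale n (c : R) (z : 'cV[C]_n) :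
  map_mx (@complex.Re R) (c%:C *: z) = c *: map_mx (@complex.Re R) z.
Proof. by apply/matrixP => i j; rewrite !mxE; case: (z i j) => a b /=; ring. Qed.

Lemma mapIm_scale n (c : R) (z : 'cV[C]_n) :
  map_mx (@complex.Im R) (c%:C *: z) = c *: map_mx (@complex.Im R) z.
Proof. by apply/matrixP => i j; rewrite !mxE; case: (z i j) => a b /=; ring. Qed.

End H.


Section H.
Variable R : rcfType.
Local Notation C := R[i].
Local Notation toC := (real_complex R).
Local Notation mRe := (map_mx (@complex.Re R)).
Local Notation mIm := (map_mx (@complex.Im R)).

Lemma cplx_col l (u : 'cV[C]_l) : cplx (col_mx (mRe u) (mIm u)) = u.
Proof.
apply/matrixP => i j; rewrite ord1 mxE col_mxEu col_mxEd !mxE.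
by case: (u i 0).
Qed.

Lemma realify_mapC l (B : 'M[R]_l) :
  realify (map_mx toC B) = block_mx B (- 0) 0 B.
Proof.
rewrite /realify; congr block_mx; try congr (- _);
  by apply/matrixP => i j; rewrite !mxE.
Qed.

Lemma rq_blockdiag l (a b : 'cV[R]_l) M :
  rq (col_mx a b) (block_mx M (- 0) 0 M) = rq a M + rq b M.
Proof.
rewrite /rq tr_col_mx mul_row_block mul_row_col oppr0 !mulmx0 !addr0 add0r.
by rewrite !mxE.
Qed.

Lemma herm_conj n (T X : 'M[C]_n) : dag X = X -> dag (dag T *m X *m T) = dag T *m X *m T.
Proof. by move=> hX; rewrite !dagM dagK hX mulmxA. Qed.

Lemma rq0 n (M : 'M[R]_n) : rq 0 M = 0.
Proof. by rewrite /rq mulmx0 mxE. Qed.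

Lemma key k (A B : 'M[R]_k) : (0 < k)%N -> A^T = A -> B^T = B ->
  (forall x, x != 0 -> 0 < rq x B) ->
  exists mu, gen_eigenvalue A B mu /\ (forall x, mu * rq x B <= rq x A).
Proof.
move=> hk hA hB hpd.
have psd x : 0 <= rq x B.
  by case: (eqVneq x 0) => [->|/hpd /ltW//]; rewrite rq0.
set Ac := map_mx toC A; set Bc := map_mx toC B.
have hAc : dag Ac = Ac by exact: dag_mapC.
have hBc : dag Bc = Bc by exact: dag_mapC.
have cpd u : u != 0 -> 0 < qf u Bc.
  move=> un0; rewrite -[u]cplx_col cplx_Im // realify_mapC rq_blockdiag ltcR.
  case: (eqVneq (mRe u) 0) => ha.
    have hb : mIm u != 0.
      apply: contra un0 => /eqP hb; rewrite -[u]cplx_col ha hb.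
      by rewrite col_mx0; apply/eqP/matrixP => i j; rewrite !mxE.
    by rewrite ha rq0 add0r hpd.
  by rewrite ltr_wpDr // hpd.
have [P [f [hP1 hP2 hBd]]] := spec_dec hBc.
have fpos i : 0 < f 0 i.
  rewrite -(spec_entry i hP1 hP2 hBd); apply: cpd.
  apply: contraTneq isT => h0.
  have : P *m (dag P *m delta_mx i 0) = (delta_mx i 0 : 'cV[C]_k) by rewrite mulmxA hP2 mul1mx.
  by rewrite h0 mulmx0 => /matrixP /(_ i 0); rewrite !mxE !eqxx /= => /eqP; rewrite eq_sym oner_eq0.
have freal i : f 0 i = (complex.Re (f 0 i))%:C.
  by have := fpos i; rewrite ltcE /= => /andP[/eqP h _]; case: (f 0 i) h => a b /= ->.
have fRpos i : 0 < complex.Re (f 0 i).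
  by have := fpos i; rewrite [f 0 i]freal ltcR.
pose s i := Num.sqrt (complex.Re (f 0 i)).
have spos i : 0 < s i by rewrite sqrtr_gt0.
have ss i : s i * s i = complex.Re (f 0 i) by rewrite -expr2 sqr_sqrtr // ltW.
pose g : 'rV[C]_k := \row_i ((s i)^-1)%:C.
pose g' : 'rV[C]_k := \row_i (s i)%:C.
pose T := dag P *m diag_mx g.
pose Ti := diag_mx g' *m P.
have dg : dag (diag_mx g) = diag_mx g.
  apply/matrixP => i j; rewrite !mxE; case: (eqVneq i j) => [->|h].
    by rewrite !mulr1n conjc_real.
  by rewrite !mulr0n conjc0.
have gg' : diag_mx g *m diag_mx g' = 1%:M.
  rewrite mulmx_diag; apply/matrixP => i j; rewrite !mxE.
  by rewrite -rmorphM mulVf ?(negbT (gt_eqF (spos i))).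
have g'g : diag_mx g' *m diag_mx g = 1%:M.
  by rewrite diag_mxC gg'.
have TTi : T *m Ti = 1%:M by rewrite /T /Ti mulmxA -(mulmxA _ (diag_mx g)) gg' mulmx1 hP1.
have TiT : Ti *m T = 1%:M.
  by rewrite /T /Ti mulmxA -(mulmxA _ P) hP2 mulmx1 g'g.
have TBT : dag T *m Bc *m T = 1%:M.
  have hmid : P *m Bc *m dag P = diag_mx f.
    by rewrite hBd !mulmxA hP2 mul1mx -mulmxA hP2 mulmx1.
  have -> : dag T *m Bc *m T = diag_mx g *m (P *m Bc *m dag P) *m diag_mx g.
    by rewrite /T dagM dagK dg !mulmxA.
  rewrite hmid mulmx_diag mulmx_diag; apply/matrixP => i j; rewrite !mxE.
  case: (eqVneq i j) => [->|h]; last by rewrite !mulr0n.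
  rewrite !mulr1n [f 0 j]freal -!rmorphM -ss.
  have -> : (s j)^-1 * (s j * s j) * (s j)^-1 = 1.
    by field; exact: lt0r_neq0 (spos j).
  by rewrite rmorph1.
clearbody T Ti.
pose A' := dag T *m Ac *m T.
have hA' : dag A' = A'.
  by rewrite /A' herm_conj.
have [Q [f2 [hQ1 hQ2 hAd]]] := spec_dec hA'.
have areal i : f2 0 i = (complex.Re (f2 0 i))%:C.
  by rewrite -(spec_entry i hQ1 hQ2 hAd) -qf_herm.
have [i0 _ hmin] := @arg_minP _ R _ (Ordinal hk) predT (fun i => complex.Re (f2 0 i)) isT.
set mu := complex.Re (f2 0 i0) in hmin.
exists mu; split.
  pose w := dag Q *m (delta_mx i0 0 : 'cV[C]_k).
  have Aw : A' *m w = f2 0 i0 *: w.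
    by rewrite /w hAd -!mulmxA (mulmxA Q) hQ2 mul1mx diag_delta scalemxAr.
  have Qw : Q *m w = delta_mx i0 0 by rewrite /w mulmxA hQ2 mul1mx.
  clearbody w.
  pose z := T *m w.
  have Tiz : Ti *m z = w by rewrite /z mulmxA TiT mul1mx.
  have Az : Ac *m z = mu%:C *: (Bc *m z).
    have -> : Ac *m z = dag Ti *m (A' *m w).
      by rewrite /A' /z !mulmxA -dagM TTi dag1 mul1mx.
    rewrite Aw -areal -[w]mul1mx -TBT /z -!scalemxAr; congr (_ *: _).
    by rewrite !mulmxA -dagM TTi dag1 mul1mx.
  clearbody z.
  have zn0 : z != 0.
    apply: contraTneq isT => hz.
    have : Q *m (Ti *m z) = (delta_mx i0 0 : 'cV[C]_k) by rewrite Tiz Qw.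
    by rewrite hz !mulmx0 => /matrixP /(_ i0 0); rewrite !mxE !eqxx /= => /eqP; rewrite eq_sym oner_eq0.
  have hre : A *m mRe z = mu *: (B *m mRe z).
    by rewrite -mapRe_mul Az mapRe_scale mapRe_mul.
  have him : A *m mIm z = mu *: (B *m mIm z).
    by rewrite -mapIm_mul Az mapIm_scale mapIm_mul.
  case: (eqVneq (mRe z) 0) => hz; last by exists (mRe z).
  exists (mIm z) => //; apply: contra zn0 => /eqP hi.
  apply/eqP/matrixP => i j; have := congr1 (fun M : 'M[R]_(k,1) => M i j) hz; have := congr1 (fun M : 'M[R]_(k,1) => M i j) hi.
  by rewrite !mxE; case: (z i j) => a b /= -> ->.
move=> x; rewrite -lecR rmorphM /= -!qf_mapC.
set xc := map_mx toC x.
have hx : xc = T *m (Ti *m xc) by rewrite mulmxA TTi mul1mx.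
set u := Ti *m xc in hx.
rewrite hx !qfM TBT -/A' hAd.
have -> : (1%:M : 'M[C]_k) = dag Q *m 1%:M *m Q by rewrite mulmx1.
rewrite -!qfM qf_diag qf1E mulr_sumr; apply: ler_sum => i _.
rewrite mulrAC [X in _ <= X]mulrC -subr_ge0 -mulrBl mulr_ge0 //.
  by rewrite [f2 0 i]areal -rmorphB ler0c subr_ge0 hmin.
by rewrite cnorm_ge0.
Qed.

End H.


Section H.
Variable R : rcfType.
Local Notation C := R[i].
Local Notation toC := (real_complex R).
Local Notation mRe := (map_mx (@complex.Re R)).
Local Notation mIm := (map_mx (@complex.Im R)).

Lemma gram_herm N l (U : 'I_l -> 'M[C]_N) iota A :
  dag A = A -> dag (gram U iota A) = gram U iota A.
Proof.
move=> hA; apply/matrixP => j k; rewrite !mxE.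
rewrite (_ : braket _ _ _ = qf iota (dag (U k) *m A *m U j)) // qf_conj.
by rewrite !dagM dagK hA mulmxA.
Qed.

Lemma realify_sym l (X : 'M[C]_l) : dag X = X -> (realify X)^T = realify X.
Proof.
move=> hX; have hT : X^T = map_mx (@conjc R) X.
  by rewrite -[in LHS]hX /dag trmxK.
have hRe : (mRe X)^T = mRe X.
  apply/matrixP => i j; have := congr1 (fun M : 'M[C]_l => M i j) hT.
  by rewrite !mxE => ->; case: (X i j).
have hIm : (mIm X)^T = - mIm X.
  apply/matrixP => i j; have := congr1 (fun M : 'M[C]_l => M i j) hT.
  by rewrite !mxE => ->; case: (X i j).
by rewrite /realify tr_block_mx hRe hIm linearN /= hIm opprK.
Qed.

Lemma diag_herm n (d : 'rV[R]_n) :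
  dag (diag_mx (map_mx toC d)) = diag_mx (map_mx toC d).
Proof.
apply/matrixP => i j; rewrite !mxE; case: (eqVneq i j) => [->|h].
  by rewrite !mulr1n conjc_real.
by rewrite !mulr0n conjc0.
Qed.

Lemma costop_herm n (c : bits n -> R) : dag (costop c) = costop c.
Proof.
have -> : costop c = diag_mx (map_mx toC (\row_i c (enum_val i))).
  by rewrite /costop; congr diag_mx; apply/matrixP => i j; rewrite !mxE.
exact: diag_herm.
Qed.

Lemma projS_herm n (S : {set bits n}) : dag (projS R S) = projS R S.
Proof.
have -> : projS R S = diag_mx (map_mx toC (\row_i ((enum_val i \in S)%:R : R))).
  by rewrite /projS; congr diag_mx; apply/matrixP => i j; rewrite !mxE rmorph_nat.
exact: diag_herm.
Qed.

Lemma projS_idem n (S : {set bits n}) : projS R S *m projS R S = projS R S.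
Proof.
rewrite /projS mulmx_diag; congr diag_mx; apply/matrixP => i j; rewrite !mxE.
by case: (_ \in _); rewrite ?mulr1 ?mulr0.
Qed.

Lemma compl_proj n (S : {set bits n}) :
  (1%:M - projS R S) = dag (1%:M - projS R S) *m (1%:M - projS R S).
Proof.
rewrite dagD dagN dag1 projS_herm mulmxBl mulmxBr !mul1mx mulmxBr mulmx1.
by rewrite projS_idem subrr subr0.
Qed.

Lemma Re_ge0 (z : C) : 0 <= z -> 0 <= complex.Re z.
Proof. by case: z => a b; rewrite lecE /= => /andP[]. Qed.

Lemma Re_gt0 (z : C) : 0 < z -> 0 < complex.Re z.
Proof. by case: z => a b; rewrite ltcE /= => /andP[]. Qed.

Lemma rq_realify_M N l (U : 'I_l -> 'M[C]_N) iota A y :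
  rq y (realify (gram U iota A)) =
  complex.Re (qf (Malpha U (cplx y) *m iota) A).
Proof. by rewrite -realify_form -Malpha_form qfM. Qed.

Lemma cplx_eq0 l (y : 'cV[R]_(l + l)) : cplx y = 0 -> y = 0.
Proof.
move=> h; rewrite -[y]vsubmxK.
have hu : usubmx y = 0.
  apply/matrixP => i j; rewrite ord1 !mxE.
  by have := congr1 (fun M : 'cV[C]_l => complex.Re (M i 0)) h; rewrite !mxE.
have hd : dsubmx y = 0.
  apply/matrixP => i j; rewrite ord1 !mxE.
  by have := congr1 (fun M : 'cV[C]_l => complex.Im (M i 0)) h; rewrite !mxE.
by rewrite hu hd col_mx0.
Qed.

Lemma Malpha_iota N l (U : 'I_l -> 'M[C]_N) iota alpha :
  (alpha^T *m \matrix_(j < l) (U j *m iota)^T) = (Malpha U alpha *m iota)^T.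
Proof.
apply/matrixP => i j; rewrite ord1 mxE [in RHS]mxE /Malpha mulmx_suml summxE.
by apply: eq_bigr => k _; rewrite -scalemxAl [in RHS]mxE !mxE.
Qed.

Lemma rq_conj n (B : 'M[R]_n) y M : B^T *m B = 1%:M ->
  rq (B *m y) (B *m M *m B^T) = rq y M.
Proof.
move=> hB; have hB' p (X : 'M[R]_(p, n)) : X *m B^T *m B = X by rewrite -mulmxA hB mulmx1.
by rewrite /rq trmx_mul !mulmxA !hB'.
Qed.

Lemma rq_E k n (E : 'M[R]_(n, k)) x M : rq (E *m x) M = rq x (E^T *m M *m E).
Proof. by rewrite /rq trmx_mul !mulmxA. Qed.

Lemma rq_diag n (D : 'M[R]_n) z : is_diag_mx D ->
  rq z D = \sum_i D i i * (z i 0) ^+ 2.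
Proof.
move=> /is_diag_mxP hD; rewrite rqE; apply: eq_bigr => i _.
rewrite (bigD1 i) //= big1 ?addr0; first by rewrite expr2 mulrA [_ * D i i]mulrC.
by move=> j hj; rewrite hD ?mulr0 ?mul0r //; rewrite eq_sym.
Qed.

Lemma embedTE k n : (k <= n)%N -> (embed R k n)^T *m embed R k n = 1%:M.
Proof.
move=> hk; apply/matrixP => i j; rewrite !mxE.
rewrite (bigD1 (widen_ord hk i)) //= big1 ?addr0.
  by rewrite !mxE /= eqxx mul1r.
move=> a ha; rewrite !mxE; case: (eqVneq (val a) (val i)) => h.
  by move: ha; rewrite (_ : a = widen_ord hk i) ?eqxx //; apply: val_inj.
by rewrite mul0r.
Qed.

Lemma embed_hi k n (x : 'cV[R]_k) (i : 'I_n) : (k <= i)%N -> (embed R k n *m x) i 0 = 0.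
Proof.
move=> hi; rewrite !mxE big1 // => j _; rewrite !mxE.
by rewrite (_ : (val i == val j) = false) ?mul0r //; apply/negbTE; rewrite neq_ltn (leq_trans (ltn_ord j) hi) orbT.
Qed.

Lemma embed_lo k n (z : 'cV[R]_n) : (k <= n)%N ->
  (forall i : 'I_n, (k <= i)%N -> z i 0 = 0) ->
  embed R k n *m ((embed R k n)^T *m z) = z.
Proof.
move=> hk hz; apply/matrixP => i j; rewrite ord1.
case: (leqP k i) => hi; first by rewrite embed_hi // hz.
rewrite mxE (bigD1 (Ordinal hi)) //= big1 ?addr0.
  rewrite !mxE /= eqxx mul1r (bigD1 i) //= big1 ?addr0.
    by rewrite !mxE /= eqxx mul1r.
  by move=> a ha; rewrite !mxE /= (_ : (val a == val i) = false) ?mul0r //; apply/negbTE.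
move=> a ha; rewrite !mxE; case: (eqVneq (val i) (val a)) => h; last by rewrite mul0r.
by move: ha; rewrite (_ : a = Ordinal hi) ?eqxx //; apply: val_inj.
Qed.

End H.


Lemma main_aux (R : rcfType) (n : nat) (c : bits n -> R) (S : {set bits n})
  (iota : 'cV[R[i]]_(dimH n)) (l : nat) (U : 'I_l -> 'M[R[i]]_(dimH n))
  (BG : 'M[R]_(l + l)) (lambda0 : R) (m : nat) (x0 : 'cV[R]_m)
  (F G H : 'M[R]_(l + l)) (Ft Ht : 'M[R]_m) :
  F = realify (gram U iota 1%:M) ->
  G = realify (gram U iota (1%:M - projS R S)) ->
  H = realify (gram U iota (costop c)) ->
  (m <= l + l)%N ->
  row_free (\matrix_(j < l) (U j *m iota)^T) ->
  BG^T *m BG = 1%:M -> BG *m BG^T = 1%:M ->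
  is_diag_mx (BG *m G *m BG^T) ->
  (forall i : 'I_(l + l), ((BG *m G *m BG^T) i i == 0) = (val i < m)%N) ->
  Ft = ulblock m (BG *m F *m BG^T) ->
  Ht = ulblock m (BG *m H *m BG^T) ->
  gen_eigenvalue Ht Ft lambda0 ->
  (forall lambda, gen_eigenvalue Ht Ft lambda -> lambda0 <= lambda) ->
  Ht *m x0 = lambda0 *: (Ft *m x0) ->
  (x0^T *m Ft *m x0) 0 0 = 1 ->
  let alpha0 := cplx (BG^T *m pad (l + l) x0) in
  [/\ qf alpha0 (gram U iota 1%:M) = 1, qf alpha0 (gram U iota (1%:M - projS R S)) = 0,
      qf alpha0 (gram U iota (costop c)) = lambda0%:C &
      forall alpha, qf alpha (gram U iota 1%:M) = 1 ->
        qf alpha (gram U iota (1%:M - projS R S)) = 0 ->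
        lambda0%:C <= qf alpha (gram U iota (costop c))].
Proof.
move=> hF hG hH hml hfree hBG1 hBG2 hdiag hD hFt hHt hev hmin hx0 hx0n alpha0.
set D := BG *m G *m BG^T in hdiag hD.
set E := embed R m (l + l).
have hX1 : dag (gram U iota 1%:M) = gram U iota 1%:M by apply: gram_herm; exact: dag1.
have hXG : dag (gram U iota (1%:M - projS R S)) = gram U iota (1%:M - projS R S).
  by apply: gram_herm; rewrite dagD dagN dag1 projS_herm.
have hXC : dag (gram U iota (costop c)) = gram U iota (costop c).
  by apply: gram_herm; exact: costop_herm.
have Gpsd y : 0 <= rq y G.
  rewrite hG rq_realify_M compl_proj -[dag _](mulmx1 _) -qfM.
  apply: Re_ge0; exact: qf1_ge0.
have Fpd y : y != 0 -> 0 < rq y F.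
  move=> yn0; rewrite hF rq_realify_M; apply: Re_gt0; apply: qf1_gt0.
  apply: contra yn0 => /eqP h0; apply/eqP/cplx_eq0.
  apply: trmx_inj; rewrite trmx0; apply: (row_free_inj hfree).
  by rewrite /= Malpha_iota h0 trmx0 mul0mx.
have Dge0 i : 0 <= D i i.
  have := Gpsd (BG^T *m delta_mx i 0).
  rewrite -(rq_conj _ _ hBG1) mulmxA hBG2 mul1mx -/D rq_diag //.
  rewrite (bigD1 i) //= big1 ?addr0; first by rewrite !mxE !eqxx /= expr1n mulr1.
  by move=> j hj; rewrite !mxE (negbTE hj) /= expr0n mulr0.
have symE (M : 'M[R]_(l + l)) : M^T = M -> (ulblock m M)^T = ulblock m M.
  by move=> hM; rewrite /ulblock !trmx_mul trmxK hM mulmxA.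
have symC (M : 'M[R]_(l + l)) : M^T = M -> (BG *m M *m BG^T)^T = BG *m M *m BG^T.
  by move=> hM; rewrite !trmx_mul trmxK hM mulmxA.
have Fsym : F^T = F by rewrite hF (realify_sym hX1); reflexivity.
have Hsym : H^T = H by rewrite hH (realify_sym hXC); reflexivity.
have Ftsym : Ft^T = Ft by rewrite hFt (symE _ (symC _ Fsym)).
have Htsym : Ht^T = Ht by rewrite hHt (symE _ (symC _ Hsym)).
have rqFt x : rq x Ft = rq (BG^T *m (E *m x)) F.
  rewrite -[RHS](rq_conj _ _ hBG1) [BG *m (_ *m _)]mulmxA hBG2 mul1mx rq_E hFt.
  reflexivity.
have rqHt x : rq x Ht = rq (BG^T *m (E *m x)) H.
  rewrite -[RHS](rq_conj _ _ hBG1) [BG *m (_ *m _)]mulmxA hBG2 mul1mx rq_E hHt.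
  reflexivity.
have hEE : E^T *m E = 1%:M by apply: embedTE.
have FtPD x : x != 0 -> 0 < rq x Ft.
  move=> xn0; rewrite rqFt; apply: Fpd; apply: contra xn0 => /eqP h0.
  have hx : E^T *m (BG *m (BG^T *m (E *m x))) = x by rewrite [BG *m (_ *m _)]mulmxA hBG2 mul1mx mulmxA hEE mul1mx.
  by rewrite -hx h0 !mulmx0.
have hm : (0 < m)%N.
  case: hev => x xn0 _; rewrite lt0n; apply: contra xn0 => /eqP m0.
  apply/eqP/matrixP => i j; have := ltn_ord i; rewrite {2}m0 ltn0; discriminate.
have [mu [hmu_ev hmu]] := key hm Htsym Ftsym FtPD.
have lam_mu := hmin mu hmu_ev.
have qfF y : qf (cplx y) (gram U iota 1%:M) = (rq y F)%:C.
  rewrite (cplx_Im _ hX1) hF; reflexivity.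
have qfG y : qf (cplx y) (gram U iota (1%:M - projS R S)) = (rq y G)%:C.
  rewrite (cplx_Im _ hXG) hG; reflexivity.
have qfH y : qf (cplx y) (gram U iota (costop c)) = (rq y H)%:C.
  rewrite (cplx_Im _ hXC) hH; reflexivity.
have rqG y : rq y G = \sum_i D i i * ((BG *m y) i 0) ^+ 2.
  by rewrite -(rq_conj _ _ hBG1) -/D (rq_diag _ hdiag).
have hy0 : BG^T *m pad (l + l) x0 = BG^T *m (E *m x0) by [].
have hx0Ft : rq x0 Ft = 1 by exact: hx0n.
split.
- by rewrite /alpha0 qfF hy0 -rqFt hx0Ft.
- rewrite /alpha0 qfG hy0 rqG [BG *m (_ *m _)]mulmxA hBG2 mul1mx big1 ?rmorph0 //.
  move=> i _; case: (ltnP i m) => hi.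
    by have := hD i; rewrite hi => /eqP ->; rewrite mul0r.
  by rewrite embed_hi // expr0n mulr0.
- rewrite /alpha0 qfH hy0 -rqHt; congr (_ %:C).
  by rewrite /rq -mulmxA hx0 -scalemxAr mulmxA mxE -/(rq x0 Ft) hx0Ft mulr1.
move=> alpha h1 h2.
set y := col_mx (map_mx (@complex.Re R) alpha) (map_mx (@complex.Im R) alpha).
have ha : cplx y = alpha by exact: cplx_col.
rewrite -ha qfF in h1; rewrite -ha qfG in h2; rewrite -ha qfH.
have hyF : rq y F = 1 by apply: complexI; rewrite h1 rmorph1.
have hyG : rq y G = 0 by apply: complexI; rewrite h2 rmorph0.
set z := BG *m y.
have hz (i : 'I_(l + l)) : (m <= i)%N -> z i 0 = 0.
  move=> hi; move: hyG; rewrite rqG -/z => hs.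
  have hge j : predT j -> 0 <= D j j * z j 0 ^+ 2 by move=> _; rewrite mulr_ge0 ?sqr_ge0.
  have /eqP := psumr_eq0P hge hs (isT : predT i).
  rewrite mulf_eq0 sqrf_eq0 => /orP[/eqP hDi|/eqP //].
  by have := hD i; rewrite hDi eqxx ltnNge hi.
have hEx : E *m (E^T *m z) = z by apply: embed_lo.
rewrite lecR; apply: (le_trans lam_mu).
have hyx : BG^T *m (E *m (E^T *m z)) = y by rewrite hEx /z mulmxA hBG1 mul1mx.
have := hmu (E^T *m z); rewrite rqFt rqHt hyx hyF mulr1.
done.
Qed.

Unset Implicit Arguments. Set Strict Implicit. Set Printing Implicit Defensive.

Theorem theorem1 (R : rcfType) (n : nat) (c : bits n -> R) (S : {set bits n})
  (iota : 'cV[R[i]]_(dimH n)) (l : nat) (U : 'I_l -> 'M[R[i]]_(dimH n))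
  (BG : 'M[R]_(l + l)) (lambda0 : R) (x0 : 'cV[R]_(\rank (kermx (realify (gram U iota (1%:M - projS R S)))))) :
  (forall i : 'I_(dimH n), enum_val i \notin S -> iota i 0 = 0) ->
  braket iota 1%:M iota = 1 ->
  (0 < l)%N ->
  (forall j, unitary_mx (U j)) ->
  (forall j : 'I_l, val j = l.-1 -> U j = 1%:M) ->
  row_free (\matrix_(j < l) (U j *m iota)^T) ->
  let Cop := costop c in
  let PS := projS R S in
  let F := realify (gram U iota 1%:M) in
  let G := realify (gram U iota (1%:M - PS)) in
  let H := realify (gram U iota Cop) in
  let m := \rank (kermx G) in
  orthogonal_mx BG ->
  is_diag_mx (BG *m G *m invmx BG) ->
  (forall i : 'I_(l + l), ((BG *m G *m invmx BG) i i == 0) = (val i < m)%N) ->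
  let Ft := ulblock m (BG *m F *m invmx BG) in
  let Ht := ulblock m (BG *m H *m invmx BG) in
  gen_eigenvalue Ht Ft lambda0 ->
  (forall lambda, gen_eigenvalue Ht Ft lambda -> lambda0 <= lambda) ->
  Ht *m x0 = lambda0 *: (Ft *m x0) ->
  (x0^T *m Ft *m x0) 0 0 = 1 ->
  let feasible (alpha : 'cV[R[i]]_l) :=
    braket iota (dag (Malpha U alpha) *m Malpha U alpha) iota = 1 /\
    braket iota (dag (Malpha U alpha) *m (1%:M - PS) *m Malpha U alpha) iota = 0 in
  let obj (alpha : 'cV[R[i]]_l) :=
    braket iota (dag (Malpha U alpha) *m Cop *m Malpha U alpha) iota in
  let v : 'cV[R]_(l + l) := invmx BG *m pad (l + l) x0 in
  let alpha0 : 'cV[R[i]]_l :=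
    \col_(j < l) ((v (lshift l j) 0) +i* (v (rshift l j) 0)) in
  feasible alpha0 /\ obj alpha0 = lambda0%:C /\
  (forall alpha, feasible alpha -> lambda0%:C <= obj alpha).
Proof.
move=> hiota hnorm hl hU hUl hfree Cop PS F G H m [hBG1 hBG2] hdiag hD Ft Ht hev hmin hx0 hx0n
  feasible obj v alpha0.
have BGt : invmx BG = BG^T.
  have hu : BG \in unitmx by case: (mulmx1_unit hBG2).
  rewrite -[invmx BG]mulmx1 -hBG2 mulmxA (mulVmx hu) mul1mx; reflexivity.
rewrite BGt in hdiag hD.
have hml : (m <= l + l)%N := rank_leq_col _.
have hFt : Ft = ulblock m (BG *m F *m BG^T) by rewrite /Ft BGt; reflexivity.
have hHt : Ht = ulblock m (BG *m H *m BG^T) by rewrite /Ht BGt; reflexivity.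
have ha0 : alpha0 = cplx (BG^T *m pad (l + l) x0) by rewrite -BGt; reflexivity.
have [h1 h2 h3 h4] := @main_aux R n c S iota l U BG lambda0 m x0 F G H Ft Ht
  (erefl F) (erefl G) (erefl H) hml hfree hBG1 hBG2 hdiag hD hFt hHt hev hmin hx0 hx0n.
have e1 (alpha : 'cV[R[i]]_l) :
    braket iota (dag (Malpha U alpha) *m Malpha U alpha) iota = qf alpha (gram U iota 1%:M).
  rewrite -Malpha_form mulmx1; reflexivity.
have e2 (alpha : 'cV[R[i]]_l) :
    braket iota (dag (Malpha U alpha) *m (1%:M - PS) *m Malpha U alpha) iota =
    qf alpha (gram U iota (1%:M - projS R S)).
  rewrite -Malpha_form; reflexivity.
have e3 (alpha : 'cV[R[i]]_l) : obj alpha = qf alpha (gram U iota (costop c)).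
  rewrite /obj -Malpha_form; reflexivity.
split; [|split].
- rewrite /feasible e1 e2 ha0; split; [exact: h1 | exact: h2].
- rewrite e3 ha0; exact: h3.
move=> alpha [f1 f2]; rewrite e3; apply: h4.
  rewrite -e1; exact: f1.
rewrite -e2; exact: f2.
Qed.
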